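(* Let $0\le q<\tfrac12$ and $p=1-q$. Let $X_1,X_2,\dots$ be i.i.d. letters in $\{S,H\}$ with $\mathbb{P}[X_i=S]=q$ and $\mathbb{P}[X_i=H]=p$. Define the random variable $L$ as follows: (i) if $X_1=H$, then $L=1$; (ii) if $X_1X_2=SH$, then $L=2$; (iii) if $X_1X_2=SS$, let $m\ge 3$ be the first index with $X_m=H$ and (number of $S$ among $X_1,\dots,X_m$) $-$ (number of $H$ among $X_1,\dots,X_m$) $=1$, and let $L$ be the number of letters $S$ among $X_1,\dots,X_m$. Then $$\mathbb{E}[L]=1+\frac{p^2q}{p-q}.$$
   Context: This models one attack cycle of the Selfish Mining strategy in Bitcoin: each newly validated block is found by the selfish miner (letter $S$, relative hashrate $q$) or by the honest miners (letter $H$, relative hashrate $p$), independently, and $L$ is the number of blocks added to the official blockchain during the attack cycle. *)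

(* Defs.v *)
From HB Require Import structures.
From mathcomp Require Import all_boot all_order all_algebra.
From mathcomp Require Import all_classical all_reals all_analysis.
Set Implicit Arguments. Unset Strict Implicit. Unset Printing Implicit Defensive.
Import Order.TTheory GRing.Theory Num.Theory.
Import numFieldNormedType.Exports.
Local Open Scope ring_scope.

(* A finite word of letters: [true] = S (selfish), [false] = H (honest). *)
Definition nS (w : seq bool) : nat := count id w.
Definition nH (w : seq bool) : nat := count negb w.

(* Index m (1-based, m = k) satisfies the rule of case (iii):
   m >= 3, X_m = H, and #S - #H = 1 among X_1..X_m. *)
Definition case3_cond (w : seq bool) (k : nat) : bool :=
  [&& (3 <= k)%N, nth true w k.-1 == false & nS (take k w) == (nH (take k w)).+1].

(* [is_stop w] holds iff the random prefix X_1..X_n equal to w (n = size w)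
   is exactly the prefix read when the attack cycle ends, i.e. the stopping
   time equals n and its value is determined by w. *)
Definition is_stop (w : seq bool) : bool :=
  match w with
  | [:: false] => true
  | [:: true; false] => true
  | true :: true :: _ =>
      case3_cond w (size w) && all (fun k => ~~ case3_cond w k) (iota 1 (size w).-1)
  | _ => false
  end.

Definition L_of (w : seq bool) : nat :=
  match w with
  | [:: false] => 1%N
  | [:: true; false] => 2%N
  | _ => nS w
  end.

Definition word_prob {R : realType} (q p : R) (w : seq bool) : R :=
  q ^+ nS w * p ^+ nH w.

(* Contribution to E[L] of the event {stopping time = n}. *)
Definition EL_term {R : realType} (q p : R) (n : nat) : R :=
  \sum_(w : n.-tuple bool | is_stop w) word_prob q p w * (L_of w)%:R.

(* Main.v *)
Require Import Defs.
From HB Require Import structures.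
From mathcomp Require Import all_boot all_order all_algebra.
From mathcomp Require Import all_classical all_reals all_analysis.
From mathcomp Require Import zify ring lra.
Import Order.TTheory GRing.Theory Num.Theory.
Import numFieldNormedType.Exports.
Local Open Scope classical_set_scope.
Local Open Scope ring_scope.

Fixpoint fp (h : nat) (w : seq bool) : bool :=
  match w with
  | [::] => h == 0%N
  | b :: w' => (h != 0%N) && fp (if b then h.+1 else h.-1) w'
  end.

Lemma nS_cat v u : nS (v ++ u) = (nS v + nS u)%N.
Proof. by rewrite /nS count_cat. Qed.
Lemma nH_cat v u : nH (v ++ u) = (nH v + nH u)%N.
Proof. by rewrite /nH count_cat. Qed.

Lemma case3_cat v u k : (0 < k <= size v)%N ->
  case3_cond (v ++ u) k = case3_cond v k.
Proof.
case/andP=> k0 kv; rewrite /case3_cond nth_cat takel_cat //.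
by rewrite ifT //; case: k k0 kv.
Qed.

Lemma key u : forall v h, (1 <= h)%N -> nS v = (nH v + h + 1)%N -> (2 <= size v)%N ->
  case3_cond (v ++ u) (size (v ++ u)) &&
  all (fun k => ~~ case3_cond (v ++ u) k) (iota (size v) (size u)) = fp h u.
Proof.
have c0 : forall v h, (1 <= h)%N -> nS v = (nH v + h + 1)%N -> (2 <= size v)%N ->
   case3_cond v (size v) = false.
  move=> v h h1 e s2; rewrite /case3_cond take_size e.
  apply/negbTE; rewrite !negb_and; apply/orP; right; apply/orP; right.
  apply/eqP; lia.
elim: u => [|b u IH] v h h1 e s2.
  by rewrite cats0 /= andbT (c0 v h) //; case: h h1 {e}.
rewrite -cat_rcons /=.
have -> : case3_cond (rcons v b ++ u) (size v) = case3_cond v (size v).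
  rewrite -cats1 -catA case3_cat //; apply/andP; split => //; lia.
rewrite (c0 v h) //= (negPf (lt0n_neq0 h1)) /=.
have sr : size (rcons v b) = (size v).+1 by rewrite size_rcons.
case: b sr => sr.
  rewrite /= -(IH (rcons v true) h.+1) -?sr //.
  - by rewrite -cats1 nS_cat nH_cat e /=; lia.
  - by rewrite sr; apply: leqW.
case: h h1 e => // -[|h] _ e.
  have c1 : case3_cond (rcons v false ++ u) (size v).+1.
    rewrite case3_cat; last by rewrite sr; apply/andP; split => //.
    rewrite /case3_cond -sr take_size sr ltnS s2 /= nth_rcons ltnn eqxx /=.
    by rewrite -cats1 nS_cat nH_cat e /=; apply/eqP; lia.
  move: c1; case: u {IH} => [|x u] c1 /=; first by move: c1; rewrite cats0 sr => ->.
  by rewrite c1 andbF.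
rewrite /= -(IH (rcons v false) h.+1) ?sr //.
- by rewrite -cats1 nS_cat nH_cat e /=; lia.
- by apply: leqW.
Qed.

Lemma is_stop_TT u : is_stop [:: true, true & u] = fp 1 u.
Proof.
rewrite -(key u [:: true; true]) //.
Qed.


Fixpoint allw n : seq (seq bool) :=
  if n is n'.+1 then [seq true :: u | u <- allw n'] ++ [seq false :: u | u <- allw n']
  else [:: [::]].

Lemma mem_allw n w : (w \in allw n) = (size w == n).
Proof.
elim: n w => [|n IH] [|b w] //=.
  by rewrite mem_cat; apply/negbTE; rewrite negb_or; apply/andP; split;
    apply/mapP => -[].
have it : injective (cons true) by move=> x y [].
have if_ : injective (cons false) by move=> x y [].
rewrite mem_cat eqSS -IH; case: b.
  rewrite mem_map //.
  by apply/orP/idP => [[//|/mapP [] //]|]; left.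
rewrite (mem_map if_).
by apply/orP/idP => [[/mapP [] //|//]|]; right.
Qed.

Lemma uniq_allw n : uniq (allw n).
Proof.
elim: n => //= n IH; rewrite cat_uniq !map_inj_uniq //; last 2 first.
  by move=> x y [].
  by move=> x y [].
rewrite IH /= andbT; apply/hasPn => x /mapP [y _ ->]; apply/mapP => -[] //.
Qed.

Lemma tuple_sum (R : realType) (F : seq bool -> R) n :
  \sum_(w : n.-tuple bool) F w = \sum_(w <- allw n) F w.
Proof.
rewrite -(big_map val xpredT F) /=.
have -> : [seq val i | i <- index_enum {: n.-tuple bool}] =
  map val (enum {: n.-tuple bool}) by rewrite enumT.
apply: perm_big; apply: uniq_perm.
- by rewrite map_inj_uniq ?enum_uniq //; apply: val_inj.
- exact: uniq_allw.
move=> w; rewrite mem_allw; apply/mapP/idP => [[t _ ->]|/eqP sw].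
  by rewrite size_tuple.
have st : size w == n by rewrite sw.
by exists (Tuple st); rewrite ?mem_enum.
Qed.

Lemma sum_allwS (R : realType) (F : seq bool -> R) n :
  \sum_(w <- allw n.+1) F w =
  \sum_(w <- allw n) F (true :: w) + \sum_(w <- allw n) F (false :: w).
Proof. by rewrite /= big_cat !big_map. Qed.


Section Rec.
Variables (R : realType) (q p : R).

Definition fS n h := \sum_(u <- allw n) (if fp h u then word_prob q p u else 0).
Definition gS n h :=
  \sum_(u <- allw n) (if fp h u then word_prob q p u * (nS u)%:R else 0).

Lemma wpT u : word_prob q p (true :: u) = q * word_prob q p u.
Proof. by rewrite /word_prob /nS /nH /= exprS mulrA. Qed.
Lemma wpF u : word_prob q p (false :: u) = p * word_prob q p u.
Proof. by rewrite /word_prob /nS /nH /= exprS mulrCA. Qed.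

Lemma fS0 h : fS 0 h = (h == 0%N)%:R.
Proof. by rewrite /fS /= big_cons big_nil addr0 /word_prob /= expr0 mulr1; case: h. Qed.
Lemma fSS0 n : fS n.+1 0 = 0.
Proof. by rewrite /fS sum_allwS /= !big1_eq addr0. Qed.
Lemma fSSS n h : fS n.+1 h.+1 = q * fS n h.+2 + p * fS n h.
Proof.
rewrite /fS sum_allwS /= !mulr_sumr; congr (_ + _); apply: eq_bigr => u _.
  by rewrite wpT; case: ifP; rewrite ?mulr0.
by rewrite wpF; case: ifP; rewrite ?mulr0.
Qed.

Lemma gS0 h : gS 0 h = 0.
Proof. by rewrite /gS /= big_cons big_nil addr0 /nS /= mulr0; case: ifP. Qed.
Lemma gSS0 n : gS n.+1 0 = 0.
Proof. by rewrite /gS sum_allwS /= !big1_eq addr0. Qed.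
Lemma gSSS n h : gS n.+1 h.+1 = q * (gS n h.+2 + fS n h.+2) + p * gS n h.
Proof.
rewrite /gS /fS sum_allwS /=; congr (_ + _).
  rewrite -big_split /= mulr_sumr; apply: eq_bigr => u _.
  rewrite wpT; case: ifP; rewrite ?mulr0 ?addr0 //.
  by move=> _; rewrite /nS /= -/(nS u) -addn1 natrD; ring.
  by rewrite mulr0.
rewrite mulr_sumr; apply: eq_bigr => u _.
by rewrite wpF; case: ifP; rewrite ?mulr0 // /nS /= mulrA.
Qed.

Definition ELf (w : seq bool) : R :=
  if is_stop w then word_prob q p w * (L_of w)%:R else 0.

Lemma EL_allw n : EL_term q p n = \sum_(w <- allw n) ELf w.
Proof. by rewrite /EL_term big_mkcond -(@tuple_sum R ELf). Qed.

Lemma EL0 : EL_term q p 0 = 0.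
Proof. by rewrite EL_allw /ELf /= big_cons big_nil addr0. Qed.

Lemma EL1 : EL_term q p 1 = p.
Proof.
rewrite EL_allw /ELf /= !big_cons big_nil /=.
by rewrite /word_prob /nS /nH /= expr0 expr1 mul1r mulr1 add0r addr0.
Qed.

Lemma ELf_TT u : ELf [:: true, true & u] =
  if fp 1 u then q ^+ 2 * (2 * word_prob q p u + word_prob q p u * (nS u)%:R) else 0.
Proof.
rewrite /ELf is_stop_TT; case: ifP => // _.
have -> : L_of [:: true, true & u] = (nS u).+2 by [].
rewrite !wpT -addn2 natrD; ring.
Qed.

Lemma ELf_TF u : ELf [:: true, false & u] = if u == [::] then 2 * q * p else 0.
Proof.
case: u => [|b u] //=.
by rewrite /ELf /= /word_prob /nS /nH /= expr1 expr1; ring.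
Qed.

Lemma ELf_F b u : ELf [:: false, b & u] = 0.
Proof. by []. Qed.

Lemma EL2 n : EL_term q p n.+2 =
  (n == 0%N)%:R * (2 * q * p) + q ^+ 2 * (2 * fS n 1 + gS n 1).
Proof.
rewrite EL_allw sum_allwS !sum_allwS.
under eq_bigr do rewrite ELf_TT.
under [X in _ + X + _]eq_bigr do rewrite ELf_TF.
rewrite !big1_eq !addr0 [LHS]addrC; congr (_ + _).
  case: n => [|n]; first by rewrite /= big_cons big_nil addr0 mul1r.
  by rewrite sum_allwS !big1_eq addr0 mul0r.
rewrite /fS /gS mulr_sumr -big_split /= mulr_sumr.
apply: eq_bigr => u _; case: ifP => _ //; ring.
Qed.


Fixpoint Rr N h : R := match N with 0%N => 1 | N'.+1 =>
  match h with 0%N => 0 | h'.+1 => q * Rr N' h'.+2 + p * Rr N' h' end end.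
Fixpoint Dd N h : R := match N with 0%N => h%:R | N'.+1 =>
  match h with 0%N => 0 | h'.+1 => q * Dd N' h'.+2 + p * Dd N' h' end end.
Fixpoint Vv N h : R := match N with 0%N => 0 | N'.+1 =>
  match h with 0%N => 0 | h'.+1 => q * (Vv N' h'.+2 + Rr N' h'.+2) + p * Vv N' h' end end.

Definition AA N h := \sum_(n < N) fS n h.
Definition BB N h := \sum_(n < N) gS n h.

Lemma AA_S N h : AA N.+1 h.+1 = q * AA N h.+2 + p * AA N h.
Proof.
rewrite /AA big_ord_recl fS0 /= add0r !mulr_sumr -big_split /=.
by apply: eq_bigr => i _; rewrite fSSS.
Qed.
Lemma AA_S0 N : AA N.+1 0 = 1.
Proof. by rewrite /AA big_ord_recl fS0 big1 ?addr0 // => i _; rewrite fSS0. Qed.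
Lemma BB_S N h : BB N.+1 h.+1 = q * (BB N h.+2 + AA N h.+2) + p * BB N h.
Proof.
rewrite /BB /AA big_ord_recl gS0 add0r -big_split /= !mulr_sumr -big_split /=.
by apply: eq_bigr => i _; rewrite gSSS.
Qed.
Lemma BB_S0 N : BB N.+1 0 = 0.
Proof. by rewrite /BB big_ord_recl gS0 big1 ?addr0 // => i _; rewrite gSS0. Qed.

Lemma AR (pq1 : p + q = 1) N h : AA N h + Rr N h = 1.
Proof.
elim: N h => [|N IH] h; first by rewrite /AA big_ord0 add0r.
case: h => [|h]; first by rewrite AA_S0 addr0.
rewrite AA_S /=.
have e1 := IH h.+2; have e2 := IH h.
have -> : q * AA N h.+2 + p * AA N h + (q * Rr N h.+2 + p * Rr N h) =
   q * (AA N h.+2 + Rr N h.+2) + p * (AA N h + Rr N h) by ring.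
by rewrite e1 e2 !mulr1 addrC.
Qed.

Lemma BVD (pq1 : p + q = 1) N h :
  (p - q) * (BB N h + Vv N h) = q * (h%:R - Dd N h).
Proof.
elim: N h => [|N IH] h; first by rewrite /BB big_ord0 /= add0r subrr !mulr0.
case: h => [|h]; first by rewrite BB_S0 /= addr0 subrr !mulr0.
rewrite BB_S /=.
have e1 := IH h.+2; have e2 := IH h; have e3 := AR pq1 N h.+2.
have -> : (p - q) * (q * (BB N h.+2 + AA N h.+2) + p * BB N h + (q * (Vv N h.+2 + Rr N h.+2) + p * Vv N h))
  = q * ((p - q) * (BB N h.+2 + Vv N h.+2)) + p * ((p - q) * (BB N h + Vv N h))
    + (p - q) * q * (AA N h.+2 + Rr N h.+2) by ring.
rewrite e1 e2 e3.
have E2 : h.+2%:R = h%:R + 2 :> R by rewrite -addn2 natrD.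
have E1 : h.+1%:R = h%:R + 1 :> R by rewrite -addn1 natrD.
rewrite E1 E2.
apply/eqP; rewrite -subr_eq0; apply/eqP.
transitivity (q * (h%:R + 1) * (p + q - 1)); first ring.
by rewrite pq1 subrr mulr0.
Qed.

End Rec.
Arguments fS {R}. Arguments gS {R}. Arguments Rr {R}. Arguments Dd {R}. Arguments Vv {R}.
Arguments AA {R}. Arguments BB {R}. Arguments ELf {R}.



Section Lim.
Variables (R : realType) (q p : R).

Let z : R := 2 * p.
Let phi : R := (1 + 4 * p * q) / 2.
Let psi : R := (1 + phi) / 2.
Let M : R := q * z / (psi - phi).

Lemma key_id h : q * z ^+ h.+2 + p * z ^+ h = phi * z ^+ h.+1.
Proof. by rewrite /phi /z !exprS; field. Qed.

Lemma Rr_ge0 (hq : 0 <= q) (hp : 0 <= p) N h : 0 <= Rr q p N h.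
Proof.
elim: N h => [|N IH] [|h] //=; apply: addr_ge0; apply: mulr_ge0 => //.
Qed.

Lemma Dd_ge0 (hq : 0 <= q) (hp : 0 <= p) N h : 0 <= Dd q p N h.
Proof.
elim: N h => [|N IH] [|h] //=; apply: addr_ge0; apply: mulr_ge0 => //.
Qed.

Lemma Vv_ge0 (hq : 0 <= q) (hp : 0 <= p) N h : 0 <= Vv q p N h.
Proof.
elim: N h => [|N IH] [|h] //=; apply: addr_ge0; apply: mulr_ge0 => //.
by apply: addr_ge0 => //; apply: Rr_ge0.
Qed.


Lemma z_ge1 (hq0 : 0 <= q) (hq1 : q < 1 / 2) (hp : p = 1 - q) : 1 <= z.
Proof. rewrite /z hp; lra. Qed.

Lemma phi_ge0 (hq0 : 0 <= q) (hq1 : q < 1 / 2) (hp : p = 1 - q) : 0 <= phi.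
Proof. rewrite /phi hp; nra. Qed.

Lemma phi_lt_psi (hq0 : 0 <= q) (hq1 : q < 1 / 2) (hp : p = 1 - q) : phi < psi.
Proof. rewrite /psi /phi hp; nra. Qed.

Lemma psi_lt1 (hq0 : 0 <= q) (hq1 : q < 1 / 2) (hp : p = 1 - q) : psi < 1.
Proof. rewrite /psi /phi hp; nra. Qed.

Lemma Rr_le (hq0 : 0 <= q) (hq1 : q < 1 / 2) (hp : p = 1 - q) N h :
  Rr q p N h <= z ^+ h * phi ^+ N.
Proof.
have hp0 : 0 <= p by rewrite hp; lra.
have z1 := z_ge1 hq0 hq1 hp; have f0 := phi_ge0 hq0 hq1 hp.
elim: N h => [|N IH] [|h] /=.
- by rewrite expr0 mulr1.
- by rewrite expr0 mulr1 exprn_ege1.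
- by apply: mulr_ge0; apply: exprn_ge0 => //; lra.
apply: le_trans (lerD (ler_wpM2l hq0 (IH h.+2)) (ler_wpM2l hp0 (IH h))) _.
rewrite le_eqVlt; apply/orP; left; apply/eqP.
have k := key_id h.
transitivity ((q * z ^+ h.+2 + p * z ^+ h) * phi ^+ N); first ring.
by rewrite k !exprS; ring.
Qed.

Lemma bern (hq0 : 0 <= q) (hq1 : q < 1 / 2) (hp : p = 1 - q) h :
  (z - 1) * h%:R <= z ^+ h.
Proof.
have z1 := z_ge1 hq0 hq1 hp.
elim: h => [|h IH]; first by rewrite mulr0 expr0.
have e : 1 <= z ^+ h by rewrite exprn_ege1.
rewrite -addn1 natrD addn1 exprS; nra.
Qed.

Lemma Dd_le (hq0 : 0 <= q) (hq1 : q < 1 / 2) (hp : p = 1 - q) N h :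
  (z - 1) * Dd q p N h <= z ^+ h * phi ^+ N.
Proof.
have hp0 : 0 <= p by rewrite hp; lra.
have z1 := z_ge1 hq0 hq1 hp; have f0 := phi_ge0 hq0 hq1 hp.
have z0 : 0 <= z - 1 by lra.
elim: N h => [|N IH] [|h] /=.
- by rewrite mulr0 expr0 mulr1.
- by rewrite expr0 mulr1 bern.
- by rewrite mulr0; apply: mulr_ge0; apply: exprn_ge0 => //; lra.
rewrite mulrDr !mulrA ![(z - 1) * _]mulrC -!mulrA.
apply: le_trans (lerD (ler_wpM2l hq0 (IH h.+2)) (ler_wpM2l hp0 (IH h))) _.
rewrite le_eqVlt; apply/orP; left; apply/eqP.
have k := key_id h.
transitivity ((q * z ^+ h.+2 + p * z ^+ h) * phi ^+ N); first ring.
by rewrite k !exprS; ring.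
Qed.

Lemma Vv_le (hq0 : 0 <= q) (hq1 : q < 1 / 2) (hp : p = 1 - q) N h :
  Vv q p N h <= M * z ^+ h * psi ^+ N.
Proof.
have hp0 : 0 <= p by rewrite hp; lra.
have z1 := z_ge1 hq0 hq1 hp; have f0 := phi_ge0 hq0 hq1 hp.
have fs := phi_lt_psi hq0 hq1 hp.
have M0 : 0 <= M by rewrite /M; apply: divr_ge0; [apply: mulr_ge0 => //; lra | lra].
have eM : M * psi = M * phi + q * z by rewrite /M; field; rewrite subr_eq0 gt_eqF.
elim: N h => [|N IH] [|h] /=.
- by rewrite expr0 mulr1; apply: mulr_ge0 => //; apply: exprn_ge0; lra.
- by apply: mulr_ge0 => //; apply: mulr_ge0 => //; apply: exprn_ge0; lra.
- by apply: mulr_ge0; [apply: mulr_ge0 => //| ]; apply: exprn_ge0; lra.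
have r2 : Rr q p N h.+2 <= z ^+ h.+2 * psi ^+ N.
  apply: le_trans (Rr_le hq0 hq1 hp N h.+2) _.
  apply: ler_wpM2l; first by apply: exprn_ge0; lra.
  by apply: lerXn2r; rewrite ?nnegrE //; lra.
apply: le_trans (lerD (ler_wpM2l hq0 (lerD (IH h.+2) r2)) (ler_wpM2l hp0 (IH h))) _.
rewrite le_eqVlt; apply/orP; left; apply/eqP.
have k := key_id h.
transitivity ((q * z ^+ h.+2 + p * z ^+ h) * M * psi ^+ N + q * z ^+ h.+2 * psi ^+ N); first ring.
rewrite k !exprS; transitivity (z ^+ h * psi ^+ N * z * (M * phi + q * z)); first ring.
by rewrite -eM; ring.
Qed.

End Lim.
Arguments z_ge1 {R q p}. Arguments phi_ge0 {R q p}. Arguments phi_lt_psi {R q p}. Arguments psi_lt1 {R q p}.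
Arguments Rr_le {R q p}. Arguments Dd_le {R q p}. Arguments Vv_le {R q p}. Arguments bern {R q p}.
Arguments Rr_ge0 {R q p}. Arguments Dd_ge0 {R q p}. Arguments Vv_ge0 {R q p}.



Lemma psum (R : realType) (q p : R) N : \sum_(n < N.+3) EL_term q p n =
  p + 2 * q * p + q ^+ 2 * (2 * AA q p N.+1 1 + BB q p N.+1 1).
Proof.
rewrite big_ord_recl EL0 add0r big_ord_recl EL1.
under eq_bigr do rewrite /bump /= EL2.
rewrite big_split /= big_ord_recl /= mul1r big1 ?addr0; last by move=> i _; rewrite mul0r.
rewrite -mulr_sumr big_split /= -mulr_sumr /AA /BB.
by rewrite addrA.
Qed.

Lemma psum2 (R : realType) (q p : R) (hq0 : 0 <= q) (hq1 : q < 1 / 2) (hp : p = 1 - q) N :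
  \sum_(n < N.+3) EL_term q p n = (1 + p ^+ 2 * q / (p - q)) -
   q ^+ 2 * (2 * Rr q p N.+1 1 + q / (p - q) * Dd q p N.+1 1 + Vv q p N.+1 1).
Proof.
have pq1 : p + q = 1 by rewrite hp; ring.
have pq0 : p - q != 0 by rewrite hp; apply/eqP; lra.
have eA : AA q p N.+1 1 = 1 - Rr q p N.+1 1 by rewrite -(AR _ _ _ pq1 N.+1 1); ring.
have eB : BB q p N.+1 1 = q * (1 - Dd q p N.+1 1) / (p - q) - Vv q p N.+1 1.
  have e := BVD _ _ _ pq1 N.+1 1.
  have -> : BB q p N.+1 1 = (p - q) * (BB q p N.+1 1 + Vv q p N.+1 1) / (p - q) - Vv q p N.+1 1.
    by field.
  by rewrite e.
rewrite psum eA eB hp; field.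
by rewrite -hp.
Qed.

Theorem mainTheorem2 (R : realType) (q p : R)
  (hq0 : 0 <= q) (hq1 : q < 1 / 2) (hp : p = 1 - q) :
  (fun N : nat => \sum_(n < N) EL_term q p n) @ \oo --> (1 + p ^+ 2 * q / (p - q)).
Proof.
have hp0 : 0 <= p by rewrite hp; lra.
have pqp : 0 < p - q by rewrite hp; lra.
pose z := 2 * p; pose phi := (1 + 4 * p * q) / 2; pose psi := (1 + phi) / 2.
pose M := q * z / (psi - phi).
have f0 : 0 <= phi := phi_ge0 hq0 hq1 hp.
have fs : phi < psi := phi_lt_psi hq0 hq1 hp.
have s1 : psi < 1 := psi_lt1 hq0 hq1 hp.
have pw n : phi ^+ n <= psi ^+ n by apply: lerXn2r; rewrite ?nnegrE //; lra.
have z0 : 0 <= z by rewrite /z; lra.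
have hR n : Rr q p n.+1 1 <= z * psi ^+ n.+1.
  apply: le_trans (Rr_le hq0 hq1 hp n.+1 1) _.
  by rewrite expr1; apply: ler_wpM2l.
have hD n : Dd q p n.+1 1 <= z / (p - q) * psi ^+ n.+1.
  have d := Dd_le hq0 hq1 hp n.+1 1.
  have e : 2 * p - 1 = p - q by rewrite hp; ring.
  rewrite e expr1 in d.
  rewrite mulrAC ler_pdivlMr // mulrC; apply: le_trans d _; exact: ler_wpM2l.
have hV n : Vv q p n.+1 1 <= M * z * psi ^+ n.+1.
  by have := Vv_le hq0 hq1 hp n.+1 1; rewrite expr1.
pose c := q / (p - q).
have c0 : 0 <= c by rewrite /c; apply: divr_ge0 => //; lra.
pose err n := q ^+ 2 * (2 * Rr q p n.+1 1 + c * Dd q p n.+1 1 + Vv q p n.+1 1).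
pose K := q ^+ 2 * (2 * z + c * (z / (p - q)) + M * z).
have herr n : 0 <= err n <= K * psi ^+ n.+1.
  apply/andP; split.
    apply: mulr_ge0; first exact: exprn_ge0.
    have r0 := Rr_ge0 hq0 hp0 n.+1 1; have d0 := Dd_ge0 hq0 hp0 n.+1 1.
    have v0 := Vv_ge0 hq0 hp0 n.+1 1.
    by apply: addr_ge0 => //; apply: addr_ge0; apply: mulr_ge0.
  have q2 : 0 <= q ^+ 2 by exact: exprn_ge0.
  apply: le_trans (ler_wpM2l q2 (lerD (lerD (ler_wpM2l _ (hR n)) (ler_wpM2l c0 (hD n))) (hV n))) _.
    by [].
  by rewrite le_eqVlt; apply/orP; left; apply/eqP; rewrite /K; ring.
have hK : (fun n => K * psi ^+ n.+1) @ \oo --> 0.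
  have ps : `|psi| < 1 by rewrite ger0_norm /psi; lra.
  have := cvgMl_tmp (a:=K) (cvg_expr ps); rewrite mulr0 => h.
  rewrite (cvg_shiftS (fun x : nat => K * psi ^+ x)); exact: h.
have herr0 : err @ \oo --> 0.
  apply: (squeeze_cvgr _ (cvg_cst 0) hK).
  by apply: nearW => n; exact: herr.
rewrite -(cvg_shiftn 3).
have -> : [sequence \sum_(n0 < n + 3) EL_term q p n0]_n =
  (fun n => (1 + p ^+ 2 * q / (p - q)) - err n).
  apply: funext => n /=; rewrite addn3 psum2 //.
have := cvgB (cvg_cst (1 + p ^+ 2 * q / (p - q))) herr0.
rewrite subr0 => h; exact: h.
Qed.
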